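(* Assume Schanuel's conjecture $(S)$. Let $z$ and $w$ be complex numbers with $z,w\notin\{0,1\}$. If $z^{w}$ and $w^{z}$ are both algebraic, then either $z$ and $w$ are both rational, or $z$ and $w$ are both transcendental. In particular, assuming $(S)$: if $r,s,t$ are real numbers with $1<s<t$ and $s^{t}=t^{s}=r$, and if either (i) $r\in\mathbb{N}$ and $r\neq 16$, or (ii) $r^n$ is algebraic but irrational for every $n\in\mathbb{N}$, then $s$ and $t$ are both transcendental.
   Context: Schanuel's conjecture $(S)$: if $\alpha_1,\dots,\alpha_n\in\mathbb{C}$ are linearly independent over $\mathbb{Q}$, then the transcendence degree of $\mathbb{Q}(\alpha_1,\dots,\alpha_n,e^{\alpha_1},\dots,e^{\alpha_n})$ over $\mathbb{Q}$ is at least $n$. For complex $a\neq 0$ and $b$, the power $a^{b}$ means $e^{b\log a}$ for a fixed determination of the logarithm $\log a$ (for positive reals, the real logarithm). *)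

(* Defs.v *)
From Stdlib Require Import Reals QArith Qreals ZArith List.
Open Scope R_scope.

Definition CC : Type := (R * R)%type.
Definition RtoC (x : R) : CC := (x, 0).
Definition Czero : CC := RtoC 0.
Definition Cone : CC := RtoC 1.
Definition Cadd (z w : CC) : CC := (fst z + fst w, snd z + snd w).
Definition Cmul (z w : CC) : CC :=
  (fst z * fst w - snd z * snd w, fst z * snd w + snd z * fst w).
Fixpoint Cpow (z : CC) (n : nat) : CC :=
  match n with O => Cone | S m => Cmul z (Cpow z m) end.
Definition Cexp (z : CC) : CC :=
  (exp (fst z) * cos (snd z), exp (fst z) * sin (snd z)).
Definition ZtoC (c : Z) : CC := RtoC (IZR c).

Definition Crational (z : CC) : Prop := exists q : Q, z = RtoC (Q2R q).

(* z is algebraic: root of a nonzero polynomial with integer coefficients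
   (coefficient list p, p_i is the coefficient of X^i). *)
Fixpoint peval (p : list Z) (z : CC) : CC :=
  match p with
  | nil => Czero
  | c :: p' => Cadd (ZtoC c) (Cmul z (peval p' z))
  end.
Definition Calgebraic (z : CC) : Prop :=
  exists p : list Z, Exists (fun c => c <> 0%Z) p /\ peval p z = Czero.
Definition Ctranscendental (z : CC) : Prop := ~ Calgebraic z.

(* Linear independence over Q of a finite family (equivalently over Z). *)
Fixpoint lincomb (cs : list Z) (xs : list CC) : CC :=
  match cs, xs with
  | c :: cs', x :: xs' => Cadd (Cmul (ZtoC c) x) (lincomb cs' xs')
  | _, _ => Czero
  end.
Definition Q_lin_indep (xs : list CC) : Prop :=
  forall cs : list Z, length cs = length xs ->
    lincomb cs xs = Czero -> Forall (fun c => c = 0%Z) cs.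

Fixpoint monomial (xs : list CC) (e : list nat) : CC :=
  match xs, e with
  | x :: xs', k :: e' => Cmul (Cpow x k) (monomial xs' e')
  | _, _ => Cone
  end.
Fixpoint polysum (cs : list Z) (ms : list (list nat)) (xs : list CC) : CC :=
  match cs, ms with
  | c :: cs', m :: ms' => Cadd (Cmul (ZtoC c) (monomial xs m)) (polysum cs' ms' xs)
  | _, _ => Czero
  end.
(* Algebraic independence over Q: no nonzero polynomial with integer (equivalently
   rational) coefficients, written as a combination of distinct monomials,
   vanishes at xs. *)
Definition alg_indep (xs : list CC) : Prop :=
  forall (cs : list Z) (ms : list (list nat)),
    length cs = length ms -> NoDup ms ->
    Forall (fun e => length e = length xs) ms ->
    polysum cs ms xs = Czero -> Forall (fun c => c = 0%Z) cs.

(* trdeg_Q Q(gens) >= n : some n of the generators are algebraically independent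
   (for a finitely generated extension the transcendence degree is the maximal
   size of an algebraically independent subfamily of the generators). *)
Definition trdeg_ge (gens : list CC) (n : nat) : Prop :=
  exists idx : list nat, NoDup idx /\ length idx = n /\
    Forall (fun i => (i < length gens)%nat) idx /\
    alg_indep (map (fun i => nth i gens Czero) idx).

Definition Schanuel : Prop :=
  forall alphas : list CC, Q_lin_indep alphas ->
    trdeg_ge (alphas ++ map Cexp alphas) (length alphas).

(* Main.v *)
Require Import Defs.
From Stdlib Require Import Reals QArith Qreals ZArith List.
From Stdlib Require Import Znumtheory Zpow_facts Lra Lia Psatz Classical.
Open Scope R_scope.

Lemma CC_ext : forall a b c d : R, a = c -> b = d -> (a, b) = (c, d).
Proof. intros; subst; reflexivity. Qed.

Ltac cc := intros;
  repeat match goal with x : CC |- _ => destruct x end;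
  unfold Cadd, Cmul, Czero, Cone, RtoC, ZtoC in *; simpl in *;
  apply injective_projections; simpl; repeat first [rewrite opp_IZR | rewrite mult_IZR | rewrite plus_IZR | rewrite minus_IZR]; ring.

Ltac cfield := intros;
  unfold Cadd, Cmul, Czero, Cone, RtoC, ZtoC in *; simpl in *;
  apply injective_projections; simpl; repeat first [rewrite opp_IZR | rewrite mult_IZR | rewrite plus_IZR | rewrite minus_IZR]; field.

Lemma ceq_by : forall X Y K R, R = Czero -> X = Cadd Y (Cmul K R) -> X = Y.
Proof. intros X Y K R HR H; rewrite H, HR. cc. Qed.

Lemma Cadd_comm : forall x y, Cadd x y = Cadd y x. Proof. cc. Qed.
Lemma Cadd_assoc : forall x y z, Cadd x (Cadd y z) = Cadd (Cadd x y) z. Proof. cc. Qed.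
Lemma Cmul_comm : forall x y, Cmul x y = Cmul y x. Proof. cc. Qed.
Lemma Cmul_assoc : forall x y z, Cmul x (Cmul y z) = Cmul (Cmul x y) z. Proof. cc. Qed.
Lemma Cmul_add_l : forall x y z, Cmul (Cadd x y) z = Cadd (Cmul x z) (Cmul y z). Proof. cc. Qed.
Lemma Cmul_add_r : forall x y z, Cmul z (Cadd x y) = Cadd (Cmul z x) (Cmul z y). Proof. cc. Qed.
Lemma Cmul_1_l : forall x, Cmul Cone x = x. Proof. cc. Qed.
Lemma Cmul_1_r : forall x, Cmul x Cone = x. Proof. cc. Qed.
Lemma Cmul_0_l : forall x, Cmul Czero x = Czero. Proof. cc. Qed.
Lemma Cmul_0_r : forall x, Cmul x Czero = Czero. Proof. cc. Qed.
Lemma Cadd_0_l : forall x, Cadd Czero x = x. Proof. cc. Qed.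
Lemma Cadd_0_r : forall x, Cadd x Czero = x. Proof. cc. Qed.

Lemma RtoC_add : forall a b, RtoC (a + b) = Cadd (RtoC a) (RtoC b). Proof. cc. Qed.
Lemma RtoC_mul : forall a b, RtoC (a * b) = Cmul (RtoC a) (RtoC b). Proof. cc. Qed.

Lemma Cpow_add : forall z m n, Cpow z (m + n) = Cmul (Cpow z m) (Cpow z n).
Proof.
  intros z m n; induction m; simpl.
  - rewrite Cmul_1_l; reflexivity.
  - rewrite IHm, Cmul_assoc; reflexivity.
Qed.

Lemma Cpow_mul : forall z m n, Cpow z (m * n) = Cpow (Cpow z m) n.
Proof.
  intros z m n; revert m; induction n; intros m; simpl.
  - rewrite Nat.mul_0_r; reflexivity.
  - rewrite Nat.mul_succ_r, Nat.add_comm, Cpow_add, IHn; reflexivity.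
Qed.

Lemma Cpow_mul_distr : forall x y n, Cpow (Cmul x y) n = Cmul (Cpow x n) (Cpow y n).
Proof.
  intros x y n; induction n; simpl.
  - cc.
  - rewrite IHn. cc.
Qed.

Lemma RtoC_pow : forall x n, RtoC (x ^ n) = Cpow (RtoC x) n.
Proof.
  intros x n; induction n; simpl. reflexivity.
  rewrite RtoC_mul, IHn; reflexivity.
Qed.

Lemma Cmul_integral : forall x y, Cmul x y = Czero -> x = Czero \/ y = Czero.
Proof.
  intros [a b] [c d] H; unfold Cmul, Czero, RtoC in *; simpl in *.
  injection H as H1 H2.
  assert (Hp : (a*a+b*b)*(c*c+d*d) = 0) by nra.
  apply Rmult_integral in Hp as [Hp|Hp].
  - left. assert (a = 0) by nra. assert (b = 0) by nra. subst; reflexivity.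
  - right. assert (c = 0) by nra. assert (d = 0) by nra. subst; reflexivity.
Qed.

Lemma Cmul_neq0 : forall x y, x <> Czero -> y <> Czero -> Cmul x y <> Czero.
Proof. intros x y Hx Hy H; apply Cmul_integral in H as [H|H]; auto. Qed.

Lemma Cpow_neq0 : forall x n, x <> Czero -> Cpow x n <> Czero.
Proof.
  intros x n Hx; induction n; simpl.
  - unfold Cone, Czero, RtoC; intro H; injection H; lra.
  - apply Cmul_neq0; auto.
Qed.

Lemma RtoC_inj : forall a b, RtoC a = RtoC b -> a = b.
Proof. intros a b H; injection H; auto. Qed.

Lemma RtoC_neq0 : forall a, a <> 0 -> RtoC a <> Czero.
Proof. intros a Ha H; apply Ha; apply RtoC_inj; exact H. Qed.

Lemma Cexp_add : forall x y, Cexp (Cadd x y) = Cmul (Cexp x) (Cexp y).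
Proof.
  intros [a b] [c d]; unfold Cexp, Cadd, Cmul; simpl.
  rewrite exp_plus, cos_plus, sin_plus. apply CC_ext; ring.
Qed.

Lemma Cexp_0 : Cexp Czero = Cone.
Proof. unfold Cexp, Czero, Cone, RtoC; simpl. rewrite exp_0, cos_0, sin_0. apply CC_ext; ring. Qed.

Lemma Cexp_neq0 : forall x, Cexp x <> Czero.
Proof.
  intros [a b]; unfold Cexp, Czero, RtoC; simpl; intro H; injection H as H1 H2.
  pose proof (exp_pos a). pose proof (sin2_cos2 b). unfold Rsqr in *.
  assert (cos b = 0) by (apply Rmult_integral in H1 as [H1|H1]; lra).
  assert (sin b = 0) by (apply Rmult_integral in H2 as [H2|H2]; lra).
  nra.
Qed.

Lemma Cexp_nat : forall x n, Cexp (Cmul (RtoC (INR n)) x) = Cpow (Cexp x) n.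
Proof.
  intros x n; induction n.
  - simpl. replace (Cmul (RtoC 0) x) with Czero by cc. apply Cexp_0.
  - replace (Cmul (RtoC (INR (S n))) x) with (Cadd x (Cmul (RtoC (INR n)) x)).
    + rewrite Cexp_add, IHn; reflexivity.
    + rewrite S_INR. cc.
Qed.

Lemma Cexp_real : forall a, Cexp (RtoC a) = RtoC (exp a).
Proof. intros a; unfold Cexp, RtoC; simpl. rewrite cos_0, sin_0. apply CC_ext; ring. Qed.

Inductive pexp := PC (c : Z) | PV (i : nat) | PA (a b : pexp) | PM (a b : pexp).

Fixpoint ev (f : nat -> CC) (e : pexp) : CC :=
  match e with
  | PC c => ZtoC c
  | PV i => f i
  | PA a b => Cadd (ev f a) (ev f b)
  | PM a b => Cmul (ev f a) (ev f b)
  end.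

Fixpoint vars (e : pexp) : list nat :=
  match e with
  | PC _ => nil
  | PV i => i :: nil
  | PA a b | PM a b => vars a ++ vars b
  end.

Lemma ev_ext : forall f g e, (forall v, In v (vars e) -> f v = g v) -> ev f e = ev g e.
Proof.
  intros f g e; induction e; simpl; intros H; auto.
  - rewrite IHe1, IHe2; auto; intros; apply H; apply in_or_app; auto.
  - rewrite IHe1, IHe2; auto; intros; apply H; apply in_or_app; auto.
Qed.

Fixpoint monof (f : nat -> CC) (m : list nat) : CC :=
  match m with
  | nil => Cone
  | k :: m' => Cmul (Cpow (f O) k) (monof (fun i => f (S i)) m')
  end.

Lemma monomial_monof : forall xs m, length m = length xs ->
  monomial xs m = monof (fun i => nth i xs Czero) m.
Proof.
  induction xs; intros [|k m] H; simpl in *; try discriminate; auto.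
  rewrite IHxs by lia. reflexivity.
Qed.

Definition polyf (f : nat -> CC) (l : list (Z * list nat)) : CC :=
  fold_right (fun p acc => Cadd (Cmul (ZtoC (fst p)) (monof f (snd p))) acc) Czero l.

Lemma polysum_polyf : forall xs l, (forall p, In p l -> length (snd p) = length xs) ->
  polysum (map fst l) (map snd l) xs = polyf (fun i => nth i xs Czero) l.
Proof.
  intros xs l; induction l as [|[c m] l IH]; intros H; simpl; auto.
  rewrite IH by (intros; apply H; simpl; auto).
  rewrite monomial_monof by (apply (H (c, m)); simpl; auto). reflexivity.
Qed.

Lemma polyf_app : forall f l1 l2, polyf f (l1 ++ l2) = Cadd (polyf f l1) (polyf f l2).
Proof.
  intros f l1 l2; induction l1; simpl. rewrite Cadd_0_l; auto.
  rewrite IHl1, Cadd_assoc; auto.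
Qed.

Fixpoint unitv (k i : nat) : list nat :=
  match k, i with
  | O, _ => nil
  | S k', O => 1%nat :: repeat O k'
  | S k', S i' => O :: unitv k' i'
  end.

Fixpoint vadd (a b : list nat) : list nat :=
  match a, b with
  | x :: a', y :: b' => (x + y)%nat :: vadd a' b'
  | _, _ => nil
  end.

Lemma monof_zeros : forall k f, monof f (repeat O k) = Cone.
Proof. induction k; intros f; simpl; auto. rewrite IHk. cc. Qed.

Lemma monof_unitv : forall k i f, (i < k)%nat -> monof f (unitv k i) = f i.
Proof.
  induction k; intros i f H; [lia|].
  destruct i; simpl.
  - rewrite monof_zeros. cc.
  - rewrite IHk by lia. cc.
Qed.

Lemma monof_vadd : forall a b f, length a = length b ->
  monof f (vadd a b) = Cmul (monof f a) (monof f b).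
Proof.
  induction a; intros [|y b] f H; simpl in *; try discriminate.
  - cc.
  - rewrite IHa by lia. rewrite Cpow_add. cc.
Qed.

Lemma length_unitv : forall k i, length (unitv k i) = k.
Proof. induction k; intros [|i]; simpl; auto. rewrite repeat_length; auto. Qed.

Lemma length_vadd : forall a b, length a = length b -> length (vadd a b) = length a.
Proof. induction a; intros [|y b] H; simpl in *; try discriminate; auto. Qed.

Definition pmul (l1 l2 : list (Z * list nat)) : list (Z * list nat) :=
  flat_map (fun p => map (fun q => ((fst p * fst q)%Z, vadd (snd p) (snd q))) l2) l1.

Fixpoint raw (k : nat) (e : pexp) : list (Z * list nat) :=
  match e with
  | PC c => (c, repeat O k) :: nil
  | PV i => (1%Z, unitv k i) :: nil
  | PA a b => raw k a ++ raw k b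
  | PM a b => pmul (raw k a) (raw k b)
  end.

Lemma raw_len : forall k e p, In p (raw k e) -> length (snd p) = k.
Proof.
  intros k e; induction e; simpl; intros p Hp.
  - destruct Hp as [<-|[]]; simpl; apply repeat_length.
  - destruct Hp as [<-|[]]; simpl; apply length_unitv.
  - apply in_app_or in Hp as [Hp|Hp]; auto.
  - unfold pmul in Hp. apply in_flat_map in Hp as [p1 [H1 H2]].
    apply in_map_iff in H2 as [q [<- H3]]. simpl.
    rewrite length_vadd; rewrite IHe1 by auto; auto. rewrite IHe2; auto.
Qed.

Lemma ZtoC_mul : forall a b, ZtoC (a * b) = Cmul (ZtoC a) (ZtoC b).
Proof. intros; unfold ZtoC. rewrite mult_IZR. apply RtoC_mul. Qed.
Lemma ZtoC_add : forall a b, ZtoC (a + b) = Cadd (ZtoC a) (ZtoC b).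
Proof. intros; unfold ZtoC. rewrite plus_IZR. apply RtoC_add. Qed.

Lemma polyf_pmul : forall f k l1 l2,
  (forall p, In p l1 -> length (snd p) = k) -> (forall p, In p l2 -> length (snd p) = k) ->
  polyf f (pmul l1 l2) = Cmul (polyf f l1) (polyf f l2).
Proof.
  intros f k l1 l2 H1 H2; induction l1 as [|[c m] l1 IH]; simpl.
  - cc.
  - unfold pmul in *; simpl. rewrite polyf_app, IH by (intros; apply H1; simpl; auto).
    rewrite Cmul_add_l. f_equal.
    assert (Hm : length m = k) by (apply (H1 (c, m)); simpl; auto).
    clear IH H1. induction l2 as [|[c2 m2] l2 IH2]; simpl.
    + cc.
    + rewrite IH2 by (intros; apply H2; simpl; auto).
      rewrite ZtoC_mul, monof_vadd.
      * cc.
      * rewrite Hm; symmetry; apply (H2 (c2, m2)); simpl; auto.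
Qed.

Lemma raw_ok : forall k e f, (forall v, In v (vars e) -> (v < k)%nat) ->
  polyf f (raw k e) = ev f e.
Proof.
  intros k e f; induction e; simpl; intros H.
  - rewrite monof_zeros. cc.
  - rewrite monof_unitv by auto. unfold ZtoC; simpl. cc.
  - rewrite polyf_app, IHe1, IHe2; auto; intros; apply H; apply in_or_app; auto.
  - rewrite (polyf_pmul f k) by (intros; eapply raw_len; eauto).
    rewrite IHe1, IHe2; auto; intros; apply H; apply in_or_app; auto.
Qed.

Fixpoint ins (c : Z) (m : list nat) (l : list (Z * list nat)) : list (Z * list nat) :=
  match l with
  | nil => (c, m) :: nil
  | (c', m') :: l' =>
      if list_eq_dec Nat.eq_dec m m' then ((c + c')%Z, m') :: l'
      else (c', m') :: ins c m l'
  end.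

Definition collect (l : list (Z * list nat)) := fold_right (fun p acc => ins (fst p) (snd p) acc) nil l.

Lemma polyf_ins : forall f c m l,
  polyf f (ins c m l) = Cadd (Cmul (ZtoC c) (monof f m)) (polyf f l).
Proof.
  intros f c m l; induction l as [|[c' m'] l IH]; simpl; auto.
  destruct (list_eq_dec Nat.eq_dec m m'); simpl.
  - subst. rewrite ZtoC_add. cc.
  - rewrite IH. cc.
Qed.

Lemma polyf_collect : forall f l, polyf f (collect l) = polyf f l.
Proof. intros f l; induction l; simpl; auto. rewrite polyf_ins, IHl; auto. Qed.

Lemma ins_snd : forall c m l x, In x (map snd (ins c m l)) -> x = m \/ In x (map snd l).
Proof.
  intros c m l x; induction l as [|[c' m'] l IH]; simpl.
  - intros [H|[]]; auto.
  - destruct (list_eq_dec Nat.eq_dec m m'); simpl.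
    + intros [H|H]; auto.
    + intros [H|H]; auto. apply IH in H as [H|H]; auto.
Qed.

Lemma ins_nodup : forall c m l, NoDup (map snd l) -> NoDup (map snd (ins c m l)).
Proof.
  intros c m l; induction l as [|[c' m'] l IH]; simpl; intros H.
  - constructor; auto; constructor.
  - inversion H; subst. destruct (list_eq_dec Nat.eq_dec m m'); simpl.
    + constructor; auto.
    + constructor; auto. intro Hin. apply ins_snd in Hin as [Hin|Hin]; auto.
Qed.

Lemma collect_nodup : forall l, NoDup (map snd (collect l)).
Proof. induction l; simpl. constructor. apply ins_nodup; auto. Qed.

Lemma collect_len : forall k l, (forall p, In p l -> length (snd p) = k) ->
  forall p, In p (collect l) -> length (snd p) = k.
Proof.
  intros k l; induction l as [|[c m] l IH]; simpl; intros H p Hp; [destruct Hp|].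
  assert (Hx : In (snd p) (map snd (ins c m (collect l)))) by (apply in_map; auto).
  apply ins_snd in Hx as [Hx|Hx].
  - rewrite Hx. apply (H (c, m)); auto.
  - apply in_map_iff in Hx as [q [Hq1 Hq2]]. rewrite <- Hq1. apply IH; auto.
Qed.

Lemma polyf_zero : forall f l, Forall (fun c => c = 0%Z) (map fst l) -> polyf f l = Czero.
Proof.
  intros f l; induction l as [|[c m] l IH]; simpl; intros H; auto.
  inversion H; subst. rewrite IH by auto. simpl. unfold ZtoC. cc.
Qed.

Lemma dep_lemma : forall xs e,
  (forall v, In v (vars e) -> (v < length xs)%nat) ->
  ev (fun i => nth i xs Czero) e = Czero ->
  (exists f, ev f e <> Czero) -> ~ alg_indep xs.
Proof.
  intros xs e Hv H0 [f Hf] Hind.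
  set (l := collect (raw (length xs) e)).
  assert (Hlen : forall p, In p l -> length (snd p) = length xs)
    by (apply collect_len; apply raw_len).
  assert (Hz : Forall (fun c => c = 0%Z) (map fst l)).
  { unfold alg_indep in Hind; apply (Hind (map fst l) (map snd l)).
    - rewrite !length_map; auto.
    - apply collect_nodup.
    - apply Forall_forall. intros m Hm. apply in_map_iff in Hm as [p [<- Hp]]. auto.
    - rewrite polysum_polyf by auto. unfold l. rewrite polyf_collect, raw_ok; auto. }
  apply Hf. rewrite <- (raw_ok (length xs)) by auto.
  rewrite <- polyf_collect. apply polyf_zero. exact Hz.
Qed.

Fixpoint pos (v : nat) (idx : list nat) : nat :=
  match idx with nil => O | a :: t => if Nat.eqb a v then O else S (pos v t) end.

Lemma pos_ok : forall v idx, In v idx -> (pos v idx < length idx)%nat /\ nth (pos v idx) idx O = v.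
Proof.
  intros v idx; induction idx; simpl; [intros []|].
  intros H. destruct (Nat.eqb_spec a v).
  - split; [lia|auto].
  - destruct H as [H|H]; [congruence|]. destruct (IHidx H). split; [lia|auto].
Qed.

Fixpoint rn (idx : list nat) (e : pexp) : pexp :=
  match e with
  | PC c => PC c
  | PV v => PV (pos v idx)
  | PA a b => PA (rn idx a) (rn idx b)
  | PM a b => PM (rn idx a) (rn idx b)
  end.

Lemma ev_rn : forall idx g e, ev g (rn idx e) = ev (fun v => g (pos v idx)) e.
Proof. intros idx g e; induction e; simpl; auto; rewrite IHe1, IHe2; auto. Qed.

Lemma vars_rn : forall idx e x, In x (vars (rn idx e)) -> exists v, In v (vars e) /\ x = pos v idx.
Proof.
  intros idx e x; induction e; simpl; intros H.
  - destruct H.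
  - destruct H as [H|[]]. exists i; auto.
  - apply in_app_or in H as [H|H]; [destruct (IHe1 H) as [v [? ?]]|destruct (IHe2 H) as [v [? ?]]];
      exists v; split; auto; apply in_or_app; auto.
  - apply in_app_or in H as [H|H]; [destruct (IHe1 H) as [v [? ?]]|destruct (IHe2 H) as [v [? ?]]];
      exists v; split; auto; apply in_or_app; auto.
Qed.

Lemma nth_map_sel : forall gens idx j, (j < length idx)%nat ->
  nth j (map (fun i => nth i gens Czero) idx) Czero = nth (nth j idx O) gens Czero.
Proof. intros gens idx; induction idx; intros [|j] H; simpl in *; try lia; auto. apply IHidx; lia. Qed.

Lemma sel_dep : forall gens idx e,
  (forall v, In v (vars e) -> In v idx) ->
  ev (fun v => nth v gens Czero) e = Czero ->
  (exists f, ev f e <> Czero) ->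
  ~ alg_indep (map (fun i => nth i gens Czero) idx).
Proof.
  intros gens idx e Hin H0 [f Hf].
  apply (dep_lemma _ (rn idx e)).
  - intros x Hx. apply vars_rn in Hx as [v [Hv ->]]. rewrite length_map.
    apply pos_ok; auto.
  - rewrite ev_rn. transitivity (ev (fun v => nth v gens Czero) e); [|exact H0]. apply ev_ext. intros v Hv.
    destruct (pos_ok v idx (Hin v Hv)) as [Hl Hn].
    rewrite nth_map_sel by auto. rewrite Hn. reflexivity.
  - exists (fun j => f (nth j idx O)). rewrite ev_rn. rewrite <- (ev_ext f) ; auto.
    intros v Hv. destruct (pos_ok v idx (Hin v Hv)) as [Hl Hn]. rewrite Hn; auto.
Qed.

Fixpoint pol (m : list Z) (u : pexp) : pexp :=
  match m with nil => PC 0 | c :: m' => PA (PC c) (PM u (pol m' u)) end.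

Lemma ev_pol : forall f m u, ev f (pol m u) = peval m (ev f u).
Proof. intros f m u; induction m; simpl; auto. rewrite IHm; auto. Qed.

Lemma vars_pol : forall m u x, In x (vars (pol m u)) -> In x (vars u).
Proof.
  induction m; simpl; intros u x H; [destruct H|].
  apply in_app_or in H as [H|H]; eauto.
Qed.

Fixpoint pw (v : pexp) (n : nat) : pexp :=
  match n with O => PC 1 | S n' => PM v (pw v n') end.

Lemma ev_pw : forall f v n, ev f (pw v n) = Cpow (ev f v) n.
Proof. intros f v n; induction n; simpl; auto. rewrite IHn; auto. Qed.

Lemma vars_pw : forall v n x, In x (vars (pw v n)) -> In x (vars v).
Proof. induction n; simpl; intros x H; [destruct H|]. apply in_app_or in H as [H|H]; auto. Qed.

Fixpoint hom (m : list Z) (u v : pexp) : pexp :=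
  match m with
  | nil => PC 0
  | c :: m' => PA (PM (PC c) (pw v (length m'))) (PM u (hom m' u v))
  end.

Lemma vars_hom : forall m u v x, In x (vars (hom m u v)) -> In x (vars u) \/ In x (vars v).
Proof.
  induction m; simpl; intros u v x H; [destruct H|].
  repeat rewrite in_app_iff in H.
  destruct H as [H|[H|H]]; eauto. right; eapply vars_pw; eauto.
Qed.

Lemma hom_eq : forall f m u v z, ev f u = Cmul z (ev f v) ->
  Cmul (ev f v) (ev f (hom m u v)) = Cmul (Cpow (ev f v) (length m)) (peval m z).
Proof.
  intros f m u v z Hu; induction m as [|c m IH]; simpl.
  - cc.
  - rewrite ev_pw, Hu.
    transitivity (Cadd (Cmul (ZtoC c) (Cpow (ev f v) (S (length m))))
                       (Cmul z (Cmul (ev f v) (Cmul (ev f v) (ev f (hom m u v)))))).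
    + simpl. cc.
    + rewrite IH. simpl. cc.
Qed.

Lemma hom_zero : forall f m u v z, ev f v <> Czero -> ev f u = Cmul z (ev f v) ->
  peval m z = Czero -> ev f (hom m u v) = Czero.
Proof.
  intros f m u v z Hv Hu Hm. pose proof (hom_eq f m u v z Hu) as H.
  rewrite Hm, Cmul_0_r in H. apply Cmul_integral in H as [H|H]; tauto.
Qed.

Lemma hom_nz : forall f m u v z, ev f v <> Czero -> ev f u = Cmul z (ev f v) ->
  peval m z <> Czero -> ev f (hom m u v) <> Czero.
Proof.
  intros f m u v z Hv Hu Hm H0. pose proof (hom_eq f m u v z Hu) as H.
  rewrite H0, Cmul_0_r in H. symmetry in H. apply Cmul_integral in H as [H|H]; auto.
  apply (Cpow_neq0 _ (length m) Hv); auto.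
Qed.

Fixpoint rpeval (p : list Z) (x : R) : R :=
  match p with nil => 0 | c :: p' => IZR c + x * rpeval p' x end.

Lemma peval_real : forall p x, peval p (RtoC x) = RtoC (rpeval p x).
Proof. intros p x; induction p; simpl; auto. rewrite IHp. cc. Qed.

Lemma IZR_abs_ge1 : forall c, c <> 0%Z -> 1 <= Rabs (IZR c).
Proof.
  intros c Hc. rewrite <- abs_IZR. apply IZR_le. lia.
Qed.

Lemma rpeval_zeros : forall p x, Forall (fun c => c = 0%Z) p -> rpeval p x = 0.
Proof. intros p x H; induction H; simpl; auto. subst. rewrite IHForall. simpl; ring. Qed.

Lemma growth : forall p, Exists (fun c => c <> 0%Z) p ->
  exists M, forall x, M <= x -> 1 <= Rabs (rpeval p x).
Proof.
  induction p as [|c p IH]; intros H; [inversion H|].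
  destruct (Exists_dec (fun c => c <> 0%Z) p) as [Hp|Hp].
  { intros a. destruct (Z.eq_dec a 0); auto. }
  - destruct (IH Hp) as [M HM].
    exists (Rmax M (Rabs (IZR c) + 1)). intros x Hx.
    pose proof (Rmax_l M (Rabs (IZR c) + 1)). pose proof (Rmax_r M (Rabs (IZR c) + 1)).
    specialize (HM x ltac:(lra)). simpl.
    assert (Hx0 : 0 <= x) by (pose proof (Rabs_pos (IZR c)); lra).
    pose proof (Rabs_triang_inv (x * rpeval p x) (- IZR c)).
    rewrite Rabs_Ropp in H2. rewrite Rabs_mult, (Rabs_right x) in H2 by lra.
    replace (x * rpeval p x - - IZR c) with (IZR c + x * rpeval p x) in H2 by ring.
    nra.
  - exists 0. intros x _. simpl.
    assert (Hz : Forall (fun c => c = 0%Z) p).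
    { apply Forall_forall. intros a Ha. destruct (Z.eq_dec a 0); auto.
      exfalso; apply Hp. apply Exists_exists. eauto. }
    rewrite rpeval_zeros by auto. rewrite Rmult_0_r, Rplus_0_r.
    inversion H; subst; auto.
    + apply IZR_abs_ge1; auto.
    + exfalso; apply Hp; auto.
Qed.

Lemma nonroot : forall p, Exists (fun c => c <> 0%Z) p ->
  forall N, exists n : nat, N <= INR n /\ peval p (RtoC (INR n)) <> Czero.
Proof.
  intros p Hp N. destruct (growth p Hp) as [M HM].
  destruct (INR_archimed 1 (Rmax M N)) as [n Hn]; [lra|].
  pose proof (Rmax_l M N); pose proof (Rmax_r M N).
  exists n. split; [lra|]. rewrite peval_real. intro Hq. apply RtoC_inj in Hq.
  specialize (HM (INR n) ltac:(lra)). rewrite Hq, Rabs_R0 in HM. lra.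
Qed.

Lemma Crational_div : forall a b : Z, b <> 0%Z -> Crational (RtoC (IZR a / IZR b)).
Proof.
  intros a [|pb|pb] Hb; [congruence| |].
  - exists (a # pb). unfold Q2R; simpl. reflexivity.
  - exists ((- a)%Z # pb). unfold Q2R; simpl. f_equal.
    rewrite opp_IZR. replace (IZR (Z.neg pb)) with (- IZR (Z.pos pb)).
    + field. apply not_0_IZR; lia.
    + rewrite <- opp_IZR. reflexivity.
Qed.

Lemma Crational_alg : forall x, Crational x -> Calgebraic x.
Proof.
  intros x [[n d] ->]. exists ((- n)%Z :: Z.pos d :: nil). split.
  - apply Exists_cons_tl. apply Exists_cons_hd. lia.
  - unfold Q2R; simpl. apply injective_projections; simpl.
    + rewrite opp_IZR. field. apply not_0_IZR; lia.
    + ring.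
Qed.

Lemma trans_irrat : forall x, Ctranscendental x -> ~ Crational x.
Proof. intros x H Hr; apply H, Crational_alg, Hr. Qed.

Lemma lin2 : forall p q y, Cadd (ZtoC p) (Cmul (ZtoC q) y) = Czero ->
  (q = 0%Z /\ p = 0%Z) \/ Crational y.
Proof.
  intros p q [a b] H. unfold Cadd, Cmul, ZtoC, RtoC, Czero in H; simpl in H.
  injection H as H1 H2.
  destruct (Z.eq_dec q 0) as [Hq|Hq].
  - left. subst. split; auto. apply eq_IZR. simpl in H1. lra.
  - right. assert (Hq' : IZR q <> 0) by (apply not_0_IZR; auto).
    assert (Hqb : IZR q * b = 0) by lra.
    assert (b = 0) by (apply Rmult_integral in Hqb as [Hqb|Hqb]; [exfalso; auto|auto]).
    subst. replace (a, 0) with (RtoC (IZR (- p) / IZR q)).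
    + apply Crational_div; auto.
    + unfold RtoC. f_equal. rewrite opp_IZR. field_simplify_eq; auto. lra.
Qed.

Lemma Cexp_neq1_log : forall L x, Cexp L = x -> x <> Cone -> L <> Czero.
Proof. intros L x H Hx HL. subst. apply Hx. rewrite Cexp_0. reflexivity. Qed.

Lemma alg_rel : forall gens idx p, In p idx -> Calgebraic (nth p gens Czero) ->
  ~ alg_indep (map (fun i => nth i gens Czero) idx).
Proof.
  intros gens idx p Hp [m [Hm Hz]].
  apply (sel_dep gens idx (pol m (PV p))).
  - intros v Hv. apply vars_pol in Hv. destruct Hv as [<-|[]]. auto.
  - rewrite ev_pol. simpl. auto.
  - destruct (nonroot m Hm 0) as [n [_ Hn]]. exists (fun _ => RtoC (INR n)).
    rewrite ev_pol. simpl. auto.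
Qed.

Lemma hom_rel : forall gens idx u v m z,
  (forall x, In x (vars u) -> In x idx) -> (forall x, In x (vars v) -> In x idx) ->
  Exists (fun c => c <> 0%Z) m -> peval m z = Czero ->
  ev (fun i => nth i gens Czero) v <> Czero ->
  ev (fun i => nth i gens Czero) u = Cmul z (ev (fun i => nth i gens Czero) v) ->
  (exists N, forall n : nat, N <= INR n -> exists f, ev f v <> Czero /\
       ev f u = Cmul (RtoC (INR n)) (ev f v)) ->
  ~ alg_indep (map (fun i => nth i gens Czero) idx).
Proof.
  intros gens idx u v m z Hu Hv Hm Hz Hv0 Hu0 [N HN].
  apply (sel_dep gens idx (hom m u v)).
  - intros x Hx. apply vars_hom in Hx as [Hx|Hx]; auto.
  - eapply hom_zero; eauto.
  - destruct (nonroot m Hm N) as [n [Hn1 Hn2]].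
    destruct (HN n Hn1) as [f [Hf1 Hf2]]. exists f. eapply hom_nz; eauto.
Qed.

Lemma pigeon : forall idx N, NoDup idx -> Forall (fun i => (i < N)%nat) idx ->
  (length idx <= length (filter (fun j => if in_dec Nat.eq_dec j idx then true else false) (seq 0 N)))%nat.
Proof.
  intros idx N Hnd Hf. apply NoDup_incl_length; auto.
  intros i Hi. apply filter_In. split.
  - apply in_seq. rewrite Forall_forall in Hf. specialize (Hf i Hi). lia.
  - destruct (in_dec Nat.eq_dec i idx); tauto.
Qed.

Ltac pig := repeat match goal with H : context [in_dec Nat.eq_dec ?j ?idx] |- _ =>
              destruct (in_dec Nat.eq_dec j idx); simpl in H end.

Lemma schanuel_use : Schanuel -> forall alphas, Q_lin_indep alphas ->
  exists idx, NoDup idx /\ length idx = length alphas /\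
    Forall (fun i => (i < 2 * length alphas)%nat) idx /\
    alg_indep (map (fun i => nth i (alphas ++ map Cexp alphas) Czero) idx).
Proof.
  intros HS alphas Hl. destruct (HS alphas Hl) as [idx [H1 [H2 [H3 H4]]]].
  exists idx. rewrite length_app, length_map in H3. repeat split; auto.
  eapply Forall_impl; [|exact H3]. simpl; intros; lia.
Qed.

Lemma GS : Schanuel -> forall x Lx y, Cexp Lx = x -> x <> Cone -> Calgebraic x ->
  Calgebraic y -> ~ Crational y -> Calgebraic (Cexp (Cmul y Lx)) -> False.
Proof.
  intros HS x Lx y Hx Hx1 Hxa [my [Hmy Hmy0]] Hyr HA.
  assert (HL : Lx <> Czero) by (eapply Cexp_neq1_log; eauto).
  assert (Hind : Q_lin_indep (Lx :: Cmul y Lx :: nil)).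
  { intros cs Hcs H. destruct cs as [|p [|q [|]]]; simpl in Hcs; try discriminate.
    simpl in H.
    assert (H' : Cmul (Cadd (ZtoC p) (Cmul (ZtoC q) y)) Lx = Czero)
      by (rewrite <- H; cc).
    apply Cmul_integral in H' as [H'|H']; [|contradiction].
    apply lin2 in H' as [[-> ->]|H']; [|contradiction].
    repeat constructor. }
  destruct (schanuel_use HS _ Hind) as [idx [Hnd [Hlen [Hlt Hai]]]].
  simpl in Hlen, Hlt.
  pose proof (pigeon idx 4 Hnd Hlt) as Hp. rewrite Hlen in Hp. simpl in Hp.
  assert (Hc : In 2%nat idx \/ In 3%nat idx \/ (In 0%nat idx /\ In 1%nat idx))
    by (pig; first [lia | tauto]).
  revert Hai. destruct Hc as [Hc|[Hc|[Hc0 Hc1]]].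
  - apply alg_rel with 2%nat; simpl; auto. subst; auto.
  - apply alg_rel with 3%nat; simpl; auto.
  - apply (hom_rel _ _ (PV 1) (PV 0) my y); simpl; auto.
    + intros ? [<-|[]]; auto.
    + intros ? [<-|[]]; auto.
    + exists 0. intros n _. exists (fun i => match i with O => Cone | _ => RtoC (INR n) end).
      simpl. split.
      * unfold Cone; apply RtoC_neq0; lra.
      * cc.
Qed.

Definition HardCtx (z w Lz Lw : CC) (m : list Z) : Prop :=
  Cexp Lz = z /\ Cexp Lw = w /\ Lz <> Czero /\ Lw <> Czero /\ z <> Czero /\ w <> Czero /\
  Exists (fun c => c <> 0%Z) m /\ peval m z = Czero /\ ~ Crational z /\ Ctranscendental w /\
  Calgebraic (Cexp (Cmul w Lz)) /\ Calgebraic (Cexp (Cmul z Lw)).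

Ltac hctx H := destruct H as (Hz & Hw & HLz & HLw & Hz0 & Hw0 & Hm & Hmz & Hzr & Hwt & HA & HB).

Ltac cneq := unfold Cadd, Cmul, Czero, Cone, RtoC, ZtoC; simpl;
  let H := fresh "Hre" in intro H; apply (f_equal fst) in H; simpl in H.

Ltac nzv k := match goal with |- ?X <> Czero =>
  replace X with (RtoC k) by (cfield; repeat split; auto) end; apply RtoC_neq0.

Lemma IZR_neq0 : forall a, a <> 0%Z -> IZR a <> 0.
Proof. intros; apply not_0_IZR; auto. Qed.

Lemma ZtoC_nz : forall a, a <> 0%Z -> ZtoC a <> Czero.
Proof. intros a Ha; unfold ZtoC; apply RtoC_neq0, IZR_neq0; auto. Qed.

Lemma LzLw_indep : Schanuel -> forall z w Lz Lw m, HardCtx z w Lz Lw m ->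
  forall p q : Z, Cadd (Cmul (ZtoC p) Lz) (Cmul (ZtoC q) Lw) = Czero -> p = 0%Z /\ q = 0%Z.
Proof.
  intros HS z w Lz Lw m H p q Hpq. hctx H.
  destruct (Z.eq_dec p 0) as [Hp|Hp]; destruct (Z.eq_dec q 0) as [Hq|Hq]; auto; exfalso.
  - subst. rewrite (ceq_by (Cmul (ZtoC 0) Lz) Czero Czero Czero) in Hpq; try reflexivity; [|cc].
    rewrite Cadd_0_l in Hpq. apply Cmul_integral in Hpq as [H|H]; [apply (ZtoC_nz q)|]; auto.
  - subst. rewrite (ceq_by (Cmul (ZtoC 0) Lw) Czero Czero Czero) in Hpq; try reflexivity; [|cc].
    rewrite Cadd_0_r in Hpq. apply Cmul_integral in Hpq as [H|H]; [apply (ZtoC_nz p)|]; auto.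
  - assert (Hind : Q_lin_indep (Lz :: Cmul z Lw :: nil)).
    { intros cs Hcs H. destruct cs as [|r [|s [|]]]; simpl in Hcs; try discriminate.
      simpl in H.
      assert (H' : Cmul (Cadd (ZtoC (q * r)) (Cmul (ZtoC (- (s * p))) z)) Lz = Czero).
      { apply (ceq_by _ Czero (Cmul (ZtoC (- s)) z) _ Hpq).
        apply (ceq_by _ _ (ZtoC q) _ H). cc. }
      apply Cmul_integral in H' as [H'|H']; [|contradiction].
      apply lin2 in H' as [[H1 H2]|H']; [|contradiction].
      assert (s = 0%Z) by nia. assert (r = 0%Z) by nia. subst. repeat constructor. }
    destruct (schanuel_use HS _ Hind) as [idx [Hnd [Hlen [Hlt Hai]]]].
    simpl in Hlen, Hlt.
    pose proof (pigeon idx 4 Hnd Hlt) as Hp'. rewrite Hlen in Hp'. simpl in Hp'.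
    assert (Hc : In 2%nat idx \/ In 3%nat idx \/ (In 0%nat idx /\ In 1%nat idx))
      by (pig; first [lia | tauto]).
    revert Hai. destruct Hc as [Hc|[Hc|[Hc0 Hc1]]].
    + apply alg_rel with 2%nat; simpl; auto. rewrite Hz. exists m; auto.
    + apply alg_rel with 3%nat; simpl; auto.
    + apply (hom_rel _ _ (PM (PC q) (PV 1)) (PM (PC (- p)) (PV 0)) m z); simpl; auto.
      * intros ? [<-|[]]; auto.
      * intros ? [<-|[]]; auto.
      * apply Cmul_neq0; auto. apply ZtoC_nz; lia.
      * apply (ceq_by _ _ z _ Hpq). cc.
      * exists 0. intros n _.
        exists (fun i => match i with O => Cone | _ => RtoC (- IZR p * INR n / IZR q) end).
        simpl. split.
        -- cneq. rewrite opp_IZR in *. apply Hp. apply eq_IZR. lra.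
        -- cfield; apply IZR_neq0; auto.
Qed.

Lemma not_indep : forall xs, ~ Q_lin_indep xs ->
  exists cs, length cs = length xs /\ lincomb cs xs = Czero /\ ~ Forall (fun c => c = 0%Z) cs.
Proof.
  intros xs H. unfold Q_lin_indep in H.
  apply not_all_ex_not in H as [cs H]. exists cs.
  apply imply_to_and in H as [H1 H]. apply imply_to_and in H as [H2 H3]. auto.
Qed.

Lemma caseA1 : Schanuel -> forall z w Lz Lw m, HardCtx z w Lz Lw m ->
  Q_lin_indep (Lz :: Lw :: Cmul w Lz :: Cmul z Lw :: nil) -> False.
Proof.
  intros HS z w Lz Lw m H Hind. hctx H.
  destruct (schanuel_use HS _ Hind) as [idx [Hnd [Hlen [Hlt Hai]]]].
  simpl in Hlen, Hlt.
  pose proof (pigeon idx 8 Hnd Hlt) as Hp'. rewrite Hlen in Hp'. simpl in Hp'.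
  assert (Hc : In 4%nat idx \/ In 6%nat idx \/ In 7%nat idx \/ (In 1%nat idx /\ In 3%nat idx)
     \/ (In 0%nat idx /\ In 2%nat idx /\ In 5%nat idx))
    by (pig; first [lia | tauto]).
  revert Hai. destruct Hc as [Hc|[Hc|[Hc|[[Hc1 Hc3]|[Hc0 [Hc2 Hc5]]]]]].
  - apply alg_rel with 4%nat; simpl; auto. rewrite Hz. exists m; auto.
  - apply alg_rel with 6%nat; simpl; auto.
  - apply alg_rel with 7%nat; simpl; auto.
  - apply (hom_rel _ _ (PV 3) (PV 1) m z); simpl; auto.
    + intros ? [<-|[]]; auto.
    + intros ? [<-|[]]; auto.
    + exists 0. intros n _.
      exists (fun i => match i with 1%nat => Cone | _ => RtoC (INR n) end).
      simpl. split.
      * cneq. lra.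
      * cc.
  - apply (sel_dep _ _ (PA (PV 2) (PM (PC (-1)) (PM (PV 5) (PV 0))))).
    + simpl. intros v Hv. repeat destruct Hv as [<-|Hv]; auto. destruct Hv.
    + simpl. rewrite Hw. cc.
    + exists (fun i => match i with 2%nat => Cone | _ => Czero end). simpl.
      cneq. lra.
Qed.

Lemma caseA2 : Schanuel -> forall z w Lz Lw m, HardCtx z w Lz Lw m ->
  Q_lin_indep (Lz :: Lw :: Cmul z Lw :: nil) ->
  ~ Q_lin_indep (Lz :: Lw :: Cmul w Lz :: Cmul z Lw :: nil) -> False.
Proof.
  intros HS z w Lz Lw m H Hind Hdep. pose proof H as H'. hctx H.
  apply not_indep in Hdep as [cs [Hcs [Hr Hnz]]].
  destruct cs as [|a [|b [|c [|d [|]]]]]; simpl in Hcs; try discriminate. simpl in Hr.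
  destruct (Z.eq_dec c 0) as [Hc|Hc].
  { subst c. assert (H3 : Forall (fun c => c = 0%Z) (a :: b :: d :: nil)).
    { apply Hind; auto. simpl. apply (ceq_by _ Czero Cone _ Hr). cc. }
    apply Hnz. inversion H3 as [|? ? Ha H4]. inversion H4 as [|? ? Hb H5].
    inversion H5 as [|? ? Hd H6]. repeat constructor; auto. }
  destruct (schanuel_use HS _ Hind) as [idx [Hnd [Hlen [Hlt Hai]]]].
  simpl in Hlen, Hlt.
  pose proof (pigeon idx 6 Hnd Hlt) as Hp'. rewrite Hlen in Hp'. simpl in Hp'.
  assert (Hcs' : In 3%nat idx \/ In 5%nat idx \/ (In 1%nat idx /\ In 2%nat idx)
     \/ (In 0%nat idx /\ In 1%nat idx /\ In 4%nat idx) \/ (In 0%nat idx /\ In 2%nat idx /\ In 4%nat idx))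
    by (pig; first [lia | tauto]).
  revert Hai. destruct Hcs' as [Hx|[Hx|[[Hx1 Hx2]|[[Hx0 [Hx1 Hx4]]|[Hx0 [Hx2 Hx4]]]]]].
  - apply alg_rel with 3%nat; simpl; auto. rewrite Hz. exists m; auto.
  - apply alg_rel with 5%nat; simpl; auto.
  - apply (hom_rel _ _ (PV 2) (PV 1) m z); simpl; auto.
    + intros ? [<-|[]]; auto.
    + intros ? [<-|[]]; auto.
    + exists 0. intros n _.
      exists (fun i => match i with 1%nat => Cone | _ => RtoC (INR n) end).
      simpl. split.
      * cneq. lra.
      * cc.
  - destruct (Z.eq_dec d 0) as [Hd|Hd].
    + subst d.
      apply (sel_dep _ _ (PA (PM (PC a) (PV 0)) (PA (PM (PC c) (PM (PV 4) (PV 0))) (PM (PC b) (PV 1))))).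
      * simpl. intros v Hv. repeat destruct Hv as [<-|Hv]; auto. destruct Hv.
      * simpl. rewrite Hw. apply (ceq_by _ Czero Cone _ Hr). cc.
      * exists (fun i => match i with 0%nat => Cone | 1%nat => Czero | _ => RtoC ((1 - IZR a) / IZR c) end).
        simpl. pose proof (IZR_neq0 c Hc). nzv 1; lra.
    + apply (hom_rel _ _ (PA (PM (PC (-a)) (PV 0)) (PA (PM (PC (-c)) (PM (PV 4) (PV 0))) (PM (PC (-b)) (PV 1))))
                         (PM (PC d) (PV 1)) m z); simpl; auto.
      * intros v Hv. repeat destruct Hv as [<-|Hv]; auto. destruct Hv.
      * intros ? [<-|[]]; auto.
      * apply Cmul_neq0; auto. apply ZtoC_nz; auto.
      * rewrite Hw. apply (ceq_by _ _ (ZtoC (-1)) _ Hr). cc.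
      * exists 0. intros n _.
        exists (fun i => match i with 0%nat => Cone | 1%nat => Cone
                 | _ => RtoC ((- (INR n * IZR d) - IZR a - IZR b) / IZR c) end).
        simpl. split.
        -- cneq. apply Hd. apply eq_IZR. lra.
        -- cfield; apply IZR_neq0; auto.
  - destruct (Z.eq_dec b 0) as [Hb|Hb].
    + subst b.
      apply (sel_dep _ _ (PA (PM (PC a) (PV 0)) (PA (PM (PC c) (PM (PV 4) (PV 0))) (PM (PC d) (PV 2))))).
      * simpl. intros v Hv. repeat destruct Hv as [<-|Hv]; auto. destruct Hv.
      * simpl. rewrite Hw. apply (ceq_by _ Czero Cone _ Hr). cc.
      * exists (fun i => match i with 0%nat => Cone | 2%nat => Czero | _ => RtoC ((1 - IZR a) / IZR c) end).
        simpl. pose proof (IZR_neq0 c Hc). nzv 1; lra.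
    + assert (HV : Cadd (Cmul (ZtoC a) Lz) (Cadd (Cmul (ZtoC c) (Cmul w Lz)) (Cmul (ZtoC d) (Cmul z Lw))) <> Czero).
      { intro HV. assert (Hb' : Cmul (ZtoC b) Lw = Czero).
        { match type of HV with ?V = _ => match type of Hr with ?R = _ =>
            transitivity (Cadd (Cmul (ZtoC (-1)) V) (Cmul Cone R)); [cc| rewrite HV, Hr; cc] end end. }
        apply Cmul_integral in Hb' as [Hb'|Hb']; [apply (ZtoC_nz b)|]; auto. }
      apply (hom_rel _ _ (PM (PC (-b)) (PV 2))
               (PA (PM (PC a) (PV 0)) (PA (PM (PC c) (PM (PV 4) (PV 0))) (PM (PC d) (PV 2)))) m z); simpl; auto.
      * intros ? [<-|[]]; auto.
      * intros v Hv. repeat destruct Hv as [<-|Hv]; auto. destruct Hv.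
      * rewrite Hw. auto.
      * rewrite Hw. apply (ceq_by _ _ (Cmul (ZtoC (-1)) z) _ Hr). cc.
      * exists 1. intros n Hn.
        exists (fun i => match i with 0%nat => Cone | 2%nat => Cone
                 | _ => RtoC ((- IZR b / INR n - IZR a - IZR d) / IZR c) end).
        simpl. split.
        -- pose proof (IZR_neq0 c Hc). pose proof (IZR_neq0 b Hb). assert (INR n <> 0) by lra.
           nzv (- IZR b / INR n). unfold Rdiv. apply Rmult_integral_contrapositive; split.
           ++ intro Hq. apply H0. lra.
           ++ apply Rinv_neq_0_compat; auto.
        -- pose proof (IZR_neq0 c Hc). assert (INR n <> 0) by lra. cfield; repeat split; auto.
Qed.

Lemma rel01 : forall z w Lz Lw m a b d idx gens,
  HardCtx z w Lz Lw m -> a <> 0%Z -> d <> 0%Z ->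
  Cadd (Cmul (ZtoC a) Lz) (Cadd (Cmul (ZtoC b) Lw) (Cadd (Cmul (ZtoC d) (Cmul z Lw)) Czero)) = Czero ->
  nth 0 gens Czero = Lz -> nth 1 gens Czero = Lw ->
  In 0%nat idx -> In 1%nat idx -> ~ alg_indep (map (fun i => nth i gens Czero) idx).
Proof.
  intros z w Lz Lw m a b d idx gens H Ha Hd Hr H0 H1 Hx0 Hx1. hctx H.
  apply (hom_rel _ _ (PA (PM (PC (-a)) (PV 0)) (PM (PC (-b)) (PV 1))) (PM (PC d) (PV 1)) m z); simpl; auto.
  - intros v Hv. repeat destruct Hv as [<-|Hv]; auto. destruct Hv.
  - intros ? [<-|[]]; auto.
  - rewrite H1. apply Cmul_neq0; auto. apply ZtoC_nz; auto.
  - rewrite H0, H1. apply (ceq_by _ _ (ZtoC (-1)) _ Hr). cc.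
  - exists 0. intros n _.
    exists (fun i => match i with 1%nat => Cone | _ => RtoC ((- (INR n * IZR d) - IZR b) / IZR a) end).
    pose proof (IZR_neq0 a Ha). pose proof (IZR_neq0 d Hd). simpl. split.
    + nzv (IZR d); auto.
    + cfield; auto.
Qed.

Lemma caseB1 : Schanuel -> forall z w Lz Lw m, HardCtx z w Lz Lw m ->
  forall a b d, a <> 0%Z -> d <> 0%Z ->
  Cadd (Cmul (ZtoC a) Lz) (Cadd (Cmul (ZtoC b) Lw) (Cadd (Cmul (ZtoC d) (Cmul z Lw)) Czero)) = Czero ->
  Q_lin_indep (Lz :: Lw :: Cmul w Lz :: nil) -> False.
Proof.
  intros HS z w Lz Lw m H a b d Ha Hd Hr Hind. pose proof H as H'. hctx H.
  destruct (schanuel_use HS _ Hind) as [idx [Hnd [Hlen [Hlt Hai]]]].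
  simpl in Hlen, Hlt.
  pose proof (pigeon idx 6 Hnd Hlt) as Hp'. rewrite Hlen in Hp'. simpl in Hp'.
  assert (Hcs' : In 3%nat idx \/ In 5%nat idx \/ (In 0%nat idx /\ In 1%nat idx)
     \/ (In 0%nat idx /\ In 2%nat idx /\ In 4%nat idx) \/ (In 1%nat idx /\ In 2%nat idx /\ In 4%nat idx))
    by (pig; first [lia | tauto]).
  revert Hai. destruct Hcs' as [Hx|[Hx|[[Hx0 Hx1]|[[Hx0 [Hx2 Hx4]]|[Hx1 [Hx2 Hx4]]]]]].
  - apply alg_rel with 3%nat; simpl; auto. rewrite Hz. exists m; auto.
  - apply alg_rel with 5%nat; simpl; auto.
  - apply (rel01 z w Lz Lw m a b d); auto.
  - apply (sel_dep _ _ (PA (PV 2) (PM (PC (-1)) (PM (PV 4) (PV 0))))).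
    + simpl. intros v Hv. repeat destruct Hv as [<-|Hv]; auto. destruct Hv.
    + simpl. rewrite Hw. cc.
    + exists (fun i => match i with 2%nat => Cone | _ => Czero end). simpl.
      nzv 1; lra.
  - apply (hom_rel _ _ (PA (PM (PC (-a)) (PV 2)) (PM (PC (-b)) (PM (PV 4) (PV 1))))
                       (PM (PC d) (PM (PV 4) (PV 1))) m z); simpl; auto.
    + intros v Hv. repeat destruct Hv as [<-|Hv]; auto. destruct Hv.
    + intros v Hv. repeat destruct Hv as [<-|Hv]; auto. destruct Hv.
    + rewrite Hw. apply Cmul_neq0; [apply ZtoC_nz; auto|]. apply Cmul_neq0; auto.
    + rewrite Hw. apply (ceq_by _ _ (Cmul (ZtoC (-1)) w) _ Hr). cc.
    + exists 0. intros n _.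
      exists (fun i => match i with 1%nat => Cone | 4%nat => Cone
               | _ => RtoC ((- (INR n * IZR d) - IZR b) / IZR a) end).
      pose proof (IZR_neq0 a Ha). pose proof (IZR_neq0 d Hd). simpl. split.
      * nzv (IZR d); auto.
      * cfield; auto.
Qed.

Lemma Cmul_cancel_r : forall X Y L, L <> Czero -> Cmul X L = Cmul Y L -> X = Y.
Proof.
  intros X Y L HL H.
  assert (H' : Cmul (Cadd X (Cmul (ZtoC (-1)) Y)) L = Czero).
  { transitivity (Cadd (Cmul X L) (Cmul (ZtoC (-1)) (Cmul Y L))); [cc|]. rewrite H. cc. }
  apply Cmul_integral in H' as [H'|H']; [|contradiction].
  transitivity (Cadd (Cadd X (Cmul (ZtoC (-1)) Y)) Y); [cc|]. rewrite H'. cc.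
Qed.

Lemma caseB2 : Schanuel -> forall z w Lz Lw m, HardCtx z w Lz Lw m ->
  forall a b d, a <> 0%Z -> d <> 0%Z ->
  Cadd (Cmul (ZtoC a) Lz) (Cadd (Cmul (ZtoC b) Lw) (Cadd (Cmul (ZtoC d) (Cmul z Lw)) Czero)) = Czero ->
  forall a2 b2 c2, b2 <> 0%Z -> c2 <> 0%Z ->
  Cadd (Cmul (ZtoC a2) Lz) (Cadd (Cmul (ZtoC b2) Lw) (Cadd (Cmul (ZtoC c2) (Cmul w Lz)) Czero)) = Czero ->
  False.
Proof.
  intros HS z w Lz Lw m H a b d Ha Hd Hr a2 b2 c2 Hb2 Hc2 Hr2. pose proof H as H'. hctx H.
  assert (Hind : Q_lin_indep (Lz :: Lw :: nil)).
  { intros cs Hcs Hl. destruct cs as [|p [|q [|]]]; simpl in Hcs; try discriminate.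
    simpl in Hl. destruct (LzLw_indep HS z w Lz Lw m H' p q) as [-> ->].
    - rewrite <- Hl. cc.
    - repeat constructor. }
  assert (HW : Cadd (ZtoC a2) (Cmul (ZtoC c2) w) <> Czero).
  { intro HW. apply lin2 in HW as [[HW _]|HW]; [contradiction|].
    apply (trans_irrat w); auto. }
  destruct (schanuel_use HS _ Hind) as [idx [Hnd [Hlen [Hlt Hai]]]].
  simpl in Hlen, Hlt.
  pose proof (pigeon idx 4 Hnd Hlt) as Hp'. rewrite Hlen in Hp'. simpl in Hp'.
  assert (Hcs' : In 2%nat idx \/ In 3%nat idx \/ (In 0%nat idx /\ In 1%nat idx))
    by (pig; first [lia | tauto]).
  revert Hai. destruct Hcs' as [Hx|[Hx|[Hx0 Hx1]]].
  - apply alg_rel with 2%nat; simpl; auto. rewrite Hz. exists m; auto.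
  - apply (hom_rel _ _ (PA (PC (a * b2)) (PM (PC (-b)) (PA (PC a2) (PM (PC c2) (PV 3)))))
                       (PM (PC d) (PA (PC a2) (PM (PC c2) (PV 3)))) m z); simpl; auto.
    + intros v Hv. repeat destruct Hv as [<-|Hv]; auto. destruct Hv.
    + intros v Hv. repeat destruct Hv as [<-|Hv]; auto. destruct Hv.
    + rewrite Hw. apply Cmul_neq0; [apply ZtoC_nz; auto|auto].
    + rewrite Hw. apply (Cmul_cancel_r _ _ Lw HLw).
      apply (ceq_by _ _ (ZtoC a) _ Hr2).
      apply (ceq_by _ _ (Cmul (ZtoC (-1)) (Cadd (ZtoC a2) (Cmul (ZtoC c2) w))) _ Hr).
      cc.
    + pose proof (IZR_neq0 a Ha). pose proof (IZR_neq0 d Hd).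
      pose proof (IZR_neq0 b2 Hb2). pose proof (IZR_neq0 c2 Hc2).
      assert (Hd1 : 1 <= Rabs (IZR d)) by (apply IZR_abs_ge1; auto).
      exists (Rabs (IZR b) + 1). intros n Hn.
      assert (HD : IZR b + INR n * IZR d <> 0).
      { intro HD. assert (Habs : Rabs (INR n * IZR d) = Rabs (IZR b))
          by (replace (INR n * IZR d) with (- IZR b) by lra; apply Rabs_Ropp).
        rewrite Rabs_mult, (Rabs_right (INR n)) in Habs by (apply Rle_ge, pos_INR). pose proof (Rabs_pos (IZR b)). nra. }
      exists (fun _ => RtoC ((IZR a * IZR b2 / (IZR b + INR n * IZR d) - IZR a2) / IZR c2)).
      simpl. split.
      * nzv (IZR d * (IZR a * IZR b2 / (IZR b + INR n * IZR d))).
        apply Rmult_integral_contrapositive; split; auto.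
        unfold Rdiv. apply Rmult_integral_contrapositive; split; [|apply Rinv_neq_0_compat; auto].
        apply Rmult_integral_contrapositive; split; auto.
      * cfield; auto.
  - apply (rel01 z w Lz Lw m a b d); auto.
Qed.

Lemma hard_irr : Schanuel -> forall z w Lz Lw m, HardCtx z w Lz Lw m -> False.
Proof.
  intros HS z w Lz Lw m H. pose proof H as H'. hctx H.
  destruct (classic (Q_lin_indep (Lz :: Lw :: Cmul z Lw :: nil))) as [H3|H3].
  - destruct (classic (Q_lin_indep (Lz :: Lw :: Cmul w Lz :: Cmul z Lw :: nil))) as [H4|H4].
    + exact (caseA1 HS z w Lz Lw m H' H4).
    + exact (caseA2 HS z w Lz Lw m H' H3 H4).
  - apply not_indep in H3 as [cs [Hcs [Hr Hnz]]].
    destruct cs as [|a [|b [|d [|]]]]; simpl in Hcs; try discriminate. simpl in Hr.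
    assert (Hd : d <> 0%Z).
    { intro Hd; subst d. destruct (LzLw_indep HS z w Lz Lw m H' a b) as [-> ->].
      - apply (ceq_by _ Czero Cone _ Hr). cc.
      - apply Hnz; repeat constructor. }
    assert (Ha : a <> 0%Z).
    { intro Ha; subst a.
      assert (Hx : Cmul (Cadd (ZtoC b) (Cmul (ZtoC d) z)) Lw = Czero)
        by (apply (ceq_by _ Czero Cone _ Hr); cc).
      apply Cmul_integral in Hx as [Hx|Hx]; [|contradiction].
      apply lin2 in Hx as [[Hx _]|Hx]; contradiction. }
    destruct (classic (Q_lin_indep (Lz :: Lw :: Cmul w Lz :: nil))) as [H3'|H3'].
    + exact (caseB1 HS z w Lz Lw m H' a b d Ha Hd Hr H3').
    + apply not_indep in H3' as [cs2 [Hcs2 [Hr2 Hnz2]]].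
      destruct cs2 as [|a2 [|b2 [|c2 [|]]]]; simpl in Hcs2; try discriminate. simpl in Hr2.
      assert (Hc2 : c2 <> 0%Z).
      { intro Hc; subst c2. destruct (LzLw_indep HS z w Lz Lw m H' a2 b2) as [-> ->].
        - apply (ceq_by _ Czero Cone _ Hr2). cc.
        - apply Hnz2; repeat constructor. }
      assert (Hb2 : b2 <> 0%Z).
      { intro Hb; subst b2.
        assert (Hx : Cmul (Cadd (ZtoC a2) (Cmul (ZtoC c2) w)) Lz = Czero)
          by (apply (ceq_by _ Czero Cone _ Hr2); cc).
        apply Cmul_integral in Hx as [Hx|Hx]; [|contradiction].
        apply lin2 in Hx as [[Hx _]|Hx]; [contradiction|]. apply (trans_irrat w); auto. }
      exact (caseB2 HS z w Lz Lw m H' a b d Ha Hd Hr a2 b2 c2 Hb2 Hc2 Hr2).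
Qed.

Fixpoint csum (f : nat -> CC) (n : nat) : CC :=
  match n with O => Czero | S n' => Cadd (csum f n') (f n') end.

Lemma csum_ext : forall f g n, (forall i, (i < n)%nat -> f i = g i) -> csum f n = csum g n.
Proof. intros f g n H; induction n; simpl; auto. rewrite IHn, H; auto. Qed.

Lemma csum_shift : forall f n, csum f (S n) = Cadd (f O) (csum (fun i => f (S i)) n).
Proof.
  intros f n; induction n; simpl in *. cc.
  rewrite IHn. cc.
Qed.

Lemma csum_lin : forall f g a n,
  csum (fun i => Cadd (f i) (Cmul a (g i))) n = Cadd (csum f n) (Cmul a (csum g n)).
Proof. intros f g a n; induction n; simpl. cc. rewrite IHn. cc. Qed.

Lemma csum_scale : forall f a n, csum (fun i => Cmul a (f i)) n = Cmul a (csum f n).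
Proof. intros f a n; induction n; simpl. cc. rewrite IHn. cc. Qed.

Lemma csum_zero : forall n, csum (fun _ => Czero) n = Czero.
Proof. induction n; simpl; auto. rewrite IHn. cc. Qed.

Lemma peval_csum : forall l x,
  peval l x = csum (fun i => Cmul (ZtoC (nth i l 0%Z)) (Cpow x i)) (length l).
Proof.
  induction l as [|c l IH]; intros x; [reflexivity|].
  change (length (c :: l)) with (S (length l)). rewrite csum_shift. cbn [peval nth Cpow].
  rewrite IH. f_equal. cc.
  rewrite <- csum_scale. apply csum_ext. intros i _. cbn [nth Cpow]. cc.
Qed.

Fixpoint vec (P0 : list Z) (c : Z) (D' : nat) (j : nat) : nat -> Z :=
  match j with
  | O => fun i => if Nat.eqb i 0 then 1%Z else 0%Z
  | S j' => fun i => ((match i with O => 0 | S i' => c * vec P0 c D' j' i' end)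
                      - vec P0 c D' j' D' * nth i P0 0)%Z
  end.

Lemma vec_inv : forall P0 c D' E,
  Cadd (csum (fun i => Cmul (ZtoC (nth i P0 0%Z)) (Cpow E i)) (S D')) (Cmul (ZtoC c) (Cpow E (S D'))) = Czero ->
  forall j, Cmul (Cpow (ZtoC c) j) (Cpow E j) =
            csum (fun i => Cmul (ZtoC (vec P0 c D' j i)) (Cpow E i)) (S D').
Proof.
  intros P0 c D' E Hrel j. induction j.
  - rewrite csum_shift. cbn -[csum].
    rewrite (csum_ext _ (fun _ => Czero)) by (intros; unfold ZtoC; cc).
    rewrite csum_zero. cc.
  - set (T := csum (fun i => Cmul (ZtoC (nth i P0 0%Z)) (Cpow E i)) (S D')) in *.
    set (S0 := csum (fun i => Cmul (ZtoC (vec P0 c D' j i)) (Cpow E i)) D').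
    transitivity (Cmul (Cmul (ZtoC c) E) (Cmul (Cpow (ZtoC c) j) (Cpow E j))); [simpl; cc|].
    rewrite IHj. simpl csum at 1. fold S0.
    simpl vec.
    rewrite (csum_ext _ (fun i => Cadd (Cmul (ZtoC (match i with O => 0 | S i' => c * vec P0 c D' j i' end)) (Cpow E i))
                   (Cmul (ZtoC (- vec P0 c D' j D')) (Cmul (ZtoC (nth i P0 0%Z)) (Cpow E i)))))
      by (intros; cc).
    rewrite csum_lin. fold T. rewrite csum_shift.
    rewrite (csum_ext _ (fun i => Cmul (Cmul (ZtoC c) E) (Cmul (ZtoC (vec P0 c D' j i)) (Cpow E i))))
      by (intros; simpl; cc).
    rewrite csum_scale. fold S0.
    apply (ceq_by _ _ (ZtoC (vec P0 c D' j D')) _ Hrel). simpl. unfold ZtoC at 1. cc.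
Qed.

Fixpoint lc (lam : list Z) (vs : list (nat -> Z)) (i : nat) : Z :=
  match lam, vs with a :: l', v :: vs' => (a * v i + lc l' vs' i)%Z | _, _ => 0%Z end.

Lemma lc_app : forall m1 m2 l1 l2 i, length m1 = length l1 ->
  lc (m1 ++ m2) (l1 ++ l2) i = (lc m1 l1 i + lc m2 l2 i)%Z.
Proof. induction m1; intros m2 [|v l1] l2 i H; simpl in *; try lia. rewrite IHm1 by lia. lia. Qed.

Lemma lc_scale : forall a m l i, lc (map (Z.mul a) m) l i = (a * lc m l i)%Z.
Proof. induction m; intros [|v l] i; simpl; try lia. rewrite IHm. lia. Qed.

Lemma lc_ws : forall a0 n v0 m l i,
  lc m (map (fun v => fun i => (a0 * v i - v n * v0 i)%Z) l) i = (a0 * lc m l i - lc m l n * v0 i)%Z.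
Proof. induction m; intros [|v l] i; simpl; try lia. rewrite IHm. lia. Qed.

Lemma lc_zero : forall m l n, (forall v, In v l -> v n = 0%Z) -> lc m l n = 0%Z.
Proof.
  induction m; intros [|v l] n H; simpl; auto.
  rewrite (H v) by (left; auto). rewrite IHm; [lia|]. intros; apply H; right; auto.
Qed.

Lemma lindep : forall n vs, length vs = S n ->
  exists lam, length lam = S n /\ Exists (fun a => a <> 0%Z) lam /\
    forall i, (i < n)%nat -> lc lam vs i = 0%Z.
Proof.
  induction n; intros vs Hl.
  - exists (1%Z :: nil). split; [reflexivity|split; [constructor; lia|intros; lia]].
  - destruct (classic (exists v, In v vs /\ v n <> 0%Z)) as [[v0 [Hin Hv0]]|Hno].
    + apply in_split in Hin as [l1 [l2 ->]].
      set (a0 := v0 n).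
      set (ws := map (fun v => fun i => (a0 * v i - v n * v0 i)%Z) (l1 ++ l2)).
      assert (Hws : length ws = S n) by (unfold ws; rewrite length_map, length_app; rewrite length_app in Hl; simpl in Hl; lia).
      destruct (IHn ws Hws) as [mu [Hmu1 [Hmu2 Hmu3]]].
      set (m1 := firstn (length l1) mu). set (m2 := skipn (length l1) mu).
      assert (Hm : mu = m1 ++ m2) by (symmetry; apply firstn_skipn).
      assert (Hm1 : length m1 = length l1).
      { unfold m1. rewrite length_firstn. rewrite length_app in Hl; simpl in Hl. lia. }
      set (s := lc mu (l1 ++ l2) n).
      exists (map (Z.mul a0) m1 ++ (- s)%Z :: map (Z.mul a0) m2).
      assert (Hkey : forall i, lc (map (Z.mul a0) m1 ++ (- s)%Z :: map (Z.mul a0) m2) (l1 ++ v0 :: l2) i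
                     = (a0 * lc mu (l1 ++ l2) i - s * v0 i)%Z).
      { intros i. rewrite lc_app by (rewrite length_map; auto). simpl.
        rewrite !lc_scale. rewrite Hm, lc_app by auto. lia. }
      repeat split.
      * rewrite length_app; simpl; rewrite !length_map.
        rewrite Hm, length_app in Hmu1. rewrite length_app in Hl; simpl in Hl. lia.
      * rewrite Hm in Hmu2. apply Exists_app in Hmu2 as [H|H].
        -- apply Exists_app; left. apply Exists_exists in H as [x [Hx1 Hx2]].
           apply Exists_exists. exists (a0 * x)%Z. split; [apply in_map; auto|]. lia.
        -- apply Exists_app; right. apply Exists_cons_tl. apply Exists_exists in H as [x [Hx1 Hx2]].
           apply Exists_exists. exists (a0 * x)%Z. split; [apply in_map; auto|]. lia.
      * intros i Hi. rewrite Hkey.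
        destruct (Nat.eq_dec i n) as [->|Hin].
        -- fold s. unfold a0. lia.
        -- specialize (Hmu3 i ltac:(lia)). unfold ws in Hmu3. rewrite lc_ws in Hmu3.
           fold s in Hmu3. lia.
    + destruct vs as [|v vs']; simpl in Hl; [lia|].
      destruct (IHn vs' ltac:(lia)) as [mu [Hmu1 [Hmu2 Hmu3]]].
      exists (0%Z :: mu). repeat split.
      * simpl; lia.
      * apply Exists_cons_tl; auto.
      * intros i Hi. simpl. destruct (Nat.eq_dec i n) as [->|Hin].
        -- rewrite lc_zero. lia. intros v' Hv'. destruct (Z.eq_dec (v' n) 0); auto.
           exfalso; apply Hno. exists v'. split; [right|]; auto.
        -- rewrite Hmu3 by lia. lia.
Qed.

Lemma peval_app : forall l1 l2 x,
  peval (l1 ++ l2) x = Cadd (peval l1 x) (Cmul (Cpow x (length l1)) (peval l2 x)).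
Proof.
  induction l1; intros l2 x; simpl. cc.
  rewrite IHl1. cc.
Qed.

Lemma strip : forall P, Exists (fun c => c <> 0%Z) P ->
  exists P0 c, c <> 0%Z /\ forall x, peval P x = peval (P0 ++ c :: nil) x.
Proof.
  induction P as [|a P IH] using rev_ind; intros H; [inversion H|].
  destruct (Z.eq_dec a 0) as [->|Ha].
  - destruct IH as [P0 [c [Hc HP]]].
    + apply Exists_app in H as [H|H]; auto. inversion H; [congruence|inversion H1].
    + exists P0, c. split; auto. intros x. rewrite peval_app, <- HP. simpl. cc.
  - exists P, a. split; auto.
Qed.

Lemma ZtoC_pow : forall c n, ZtoC (c ^ Z.of_nat n) = Cpow (ZtoC c) n.
Proof. intros; unfold ZtoC. rewrite <- pow_IZR. apply RtoC_pow. Qed.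

Fixpoint pl (c : Z) (k : nat) (lam : list Z) (l : nat) : list Z :=
  match lam with nil => nil | a :: lam' => (a * c ^ Z.of_nat (k * l))%Z :: pl c k lam' (S l) end.

Lemma comb : forall P0 c D' E k,
  Cadd (csum (fun i => Cmul (ZtoC (nth i P0 0%Z)) (Cpow E i)) (S D')) (Cmul (ZtoC c) (Cpow E (S D'))) = Czero ->
  forall lam l,
  csum (fun i => Cmul (ZtoC (lc lam (map (fun t => vec P0 c D' (k * t)) (seq l (length lam))) i)) (Cpow E i)) (S D')
  = Cmul (Cpow E (k * l)) (peval (pl c k lam l) (Cpow E k)).
Proof.
  intros P0 c D' E k Hrel lam. induction lam as [|a lam IH]; intros l.
  - simpl. rewrite (csum_ext _ (fun _ => Czero)) by (intros; unfold ZtoC; cc). rewrite csum_zero. cc.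
  - cbn [length seq map lc].
    rewrite (csum_ext _ (fun i => Cadd (Cmul (ZtoC (lc lam (map (fun t => vec P0 c D' (k * t)) (seq (S l) (length lam))) i)) (Cpow E i))
                                        (Cmul (ZtoC a) (Cmul (ZtoC (vec P0 c D' (k * l) i)) (Cpow E i)))))
      by (intros; cc).
    rewrite csum_lin, IH, <- vec_inv by exact Hrel.
    cbn [pl peval]. rewrite ZtoC_mul, ZtoC_pow.
    replace (k * S l)%nat with (k * l + k)%nat by lia. rewrite Cpow_add.
    cc.
Qed.

Lemma alg_pow : forall E k, Calgebraic E -> Calgebraic (Cpow E k).
Proof.
  intros E k [P [HP HPE]].
  destruct (strip P HP) as [P0 [c [Hc HP0]]]. rewrite HP0 in HPE.
  destruct P0 as [|p0 P0'] eqn:HeqP.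
  { simpl in HPE. exfalso. apply (ZtoC_nz c Hc). rewrite <- HPE. cc. }
  rewrite <- HeqP in *. set (D' := length P0').
  assert (HlP : length P0 = S D') by (subst; reflexivity).
  assert (Hrel : Cadd (csum (fun i => Cmul (ZtoC (nth i P0 0%Z)) (Cpow E i)) (S D')) (Cmul (ZtoC c) (Cpow E (S D'))) = Czero).
  { rewrite peval_app in HPE. rewrite peval_csum in HPE. rewrite HlP in HPE. rewrite <- HPE. simpl. cc. }
  set (vs := map (fun t => vec P0 c D' (k * t)) (seq 0 (S (S D')))).
  destruct (lindep (S D') vs) as [lam [Hl1 [Hl2 Hl3]]].
  { unfold vs. rewrite length_map, length_seq. reflexivity. }
  pose proof (comb P0 c D' E k Hrel lam 0) as Hc0.
  rewrite Hl1 in Hc0. fold vs in Hc0.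
  rewrite (csum_ext _ (fun _ => Czero)) in Hc0
    by (intros i Hi; rewrite Hl3 by lia; unfold ZtoC; cc).
  rewrite csum_zero in Hc0. rewrite Nat.mul_0_r in Hc0. cbn [Cpow] in Hc0. rewrite Cmul_1_l in Hc0.
  exists (pl c k lam 0). split.
  - clear -Hl2 Hc. generalize 0%nat. induction Hl2; intros l0; simpl.
    + apply Exists_cons_hd. apply Z.neq_mul_0. split; auto. apply Z.pow_nonzero; lia.
    + apply Exists_cons_tl. auto.
  - auto.
Qed.

Fixpoint spread (k : nat) (P : list Z) : list Z :=
  match P with nil => nil | c :: P' => c :: (repeat 0%Z k ++ spread k P') end.

Lemma peval_zeros : forall k x, peval (repeat 0%Z k) x = Czero.
Proof. induction k; intros x; simpl; auto. rewrite IHk. cc. Qed.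

Lemma peval_spread : forall k P x, peval (spread k P) x = peval P (Cpow x (S k)).
Proof.
  induction P as [|c P IH]; intros x; simpl; auto.
  rewrite peval_app, peval_zeros, repeat_length, IH. cbn [Cpow]. cc.
Qed.

Lemma Exists_spread : forall k P, Exists (fun c => c <> 0%Z) P -> Exists (fun c => c <> 0%Z) (spread k P).
Proof.
  intros k P H; induction H; simpl.
  - apply Exists_cons_hd; auto.
  - apply Exists_cons_tl. apply Exists_app. right. auto.
Qed.

Lemma alg_root : forall E k, Calgebraic (Cpow E (S k)) -> Calgebraic E.
Proof.
  intros E k [P [HP HPE]]. exists (spread k P). split.
  - apply Exists_spread; auto.
  - rewrite peval_spread; auto.
Qed.

Lemma peval_rev : forall P y B, Cmul B y = Cone ->
  Cmul y (peval (rev P) y) = Cmul (Cpow y (length P)) (peval P B).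
Proof.
  induction P as [|c P IH]; intros y B H; simpl. cc.
  rewrite peval_app, length_rev. simpl.
  transitivity (Cadd (Cmul y (peval (rev P) y)) (Cmul (ZtoC c) (Cmul y (Cpow y (length P))))); [cc|].
  rewrite (IH y B H).
  transitivity (Cadd (Cmul (Cmul (Cpow y (length P)) (peval P B)) (Cmul B y))
                     (Cmul (ZtoC c) (Cmul y (Cpow y (length P))))); [rewrite H; cc|cc].
Qed.

Lemma alg_inv_root : forall B E k, Calgebraic B -> Cmul B (Cpow E (S k)) = Cone -> Calgebraic E.
Proof.
  intros B E k [P [HP HPB]] H. exists (spread k (rev P)). split.
  - apply Exists_spread. apply Exists_exists in HP as [x [Hx1 Hx2]].
    apply Exists_exists. exists x; split; auto. apply -> in_rev; auto.
  - rewrite peval_spread.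
    assert (Hy : Cpow E (S k) <> Czero).
    { intro H0. rewrite H0, Cmul_0_r in H. unfold Czero, Cone, RtoC in H. injection H. lra. }
    pose proof (peval_rev P (Cpow E (S k)) B H) as H1.
    rewrite HPB, Cmul_0_r in H1. apply Cmul_integral in H1 as [H1|H1]; [contradiction|auto].
Qed.

Lemma INR_posZ : forall q, INR (Pos.to_nat q) = IZR (Z.pos q).
Proof. intros q. rewrite INR_IZR_INZ, positive_nat_Z. reflexivity. Qed.

Lemma rat_case : forall z w Lw, Crational z -> z <> Czero -> Cexp Lw = w ->
  Ctranscendental w -> Calgebraic (Cexp (Cmul z Lw)) -> False.
Proof.
  intros z w Lw [[p q] ->] Hz0 Hw Hwt HB.
  set (al := Cmul (RtoC (/ IZR (Z.pos q))) Lw).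
  assert (Hq : IZR (Z.pos q) <> 0) by (apply not_0_IZR; lia).
  assert (HE : Calgebraic (Cexp al)).
  { destruct p as [|p|p].
    - exfalso. apply Hz0. unfold Q2R; simpl. cc.
    - destruct (Pos.to_nat p) as [|k] eqn:Hk; [lia|].
      apply alg_root with k. rewrite <- Hk, <- Cexp_nat.
      replace (Cmul (RtoC (INR (Pos.to_nat p))) al) with (Cmul (RtoC (Q2R (Z.pos p # q))) Lw); auto.
      unfold al, Q2R; simpl. rewrite INR_posZ. cfield; auto.
    - destruct (Pos.to_nat p) as [|k] eqn:Hk; [lia|].
      apply (alg_inv_root _ _ k HB). rewrite <- Hk, <- Cexp_nat, <- Cexp_add, <- Cexp_0.
      f_equal. unfold al, Q2R; simpl. rewrite INR_posZ.
      replace (IZR (Z.neg p)) with (- IZR (Z.pos p)) by (rewrite <- opp_IZR; reflexivity). cfield; auto. }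
  apply Hwt. rewrite <- Hw.
  replace Lw with (Cmul (RtoC (INR (Pos.to_nat q))) al).
  - rewrite Cexp_nat. apply alg_pow; auto.
  - unfold al. rewrite INR_posZ. cfield; auto.
Qed.

Lemma one_alg : Schanuel -> forall z w Lz Lw,
  z <> Czero -> z <> Cone -> w <> Czero -> w <> Cone ->
  Cexp Lz = z -> Cexp Lw = w ->
  Calgebraic (Cexp (Cmul w Lz)) -> Calgebraic (Cexp (Cmul z Lw)) ->
  Calgebraic z -> ~ Calgebraic w -> False.
Proof.
  intros HS z w Lz Lw Hz0 Hz1 Hw0 Hw1 Hz Hw HA HB Hza Hwa.
  destruct (classic (Crational z)) as [Hr|Hr].
  - exact (rat_case z w Lw Hr Hz0 Hw Hwa HB).
  - destruct Hza as [m [Hm Hmz]].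
    apply (hard_irr HS z w Lz Lw m).
    repeat split; auto.
    + eapply Cexp_neq1_log; eauto.
    + eapply Cexp_neq1_log; eauto.
Qed.

Lemma part1 : Schanuel ->
  (forall z w Lz Lw : CC,
      z <> Czero -> z <> Cone -> w <> Czero -> w <> Cone ->
      Cexp Lz = z -> Cexp Lw = w ->
      Calgebraic (Cexp (Cmul w Lz)) -> Calgebraic (Cexp (Cmul z Lw)) ->
      (Crational z /\ Crational w) \/ (Ctranscendental z /\ Ctranscendental w)).
Proof.
  intros HS z w Lz Lw Hz0 Hz1 Hw0 Hw1 Hz Hw HA HB.
  destruct (classic (Calgebraic z)) as [Hza|Hza]; destruct (classic (Calgebraic w)) as [Hwa|Hwa].
  - destruct (classic (Crational z)) as [Hzr|Hzr]; destruct (classic (Crational w)) as [Hwr|Hwr].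
    + left; auto.
    + exfalso. apply (GS HS z Lz w); auto.
    + exfalso. apply (GS HS w Lw z); auto.
    + exfalso. apply (GS HS w Lw z); auto.
  - exfalso. apply (one_alg HS z w Lz Lw); auto.
  - exfalso. apply (one_alg HS w z Lw Lz); auto.
  - right; split; auto.
Qed.

Lemma pow_lt_l : forall n a b, 0 <= a < b -> a ^ (S n) < b ^ (S n).
Proof.
  induction n; intros a b H.
  - simpl. lra.
  - specialize (IHn a b H). change (a ^ S (S n)) with (a * a ^ S n).
    change (b ^ S (S n)) with (b * b ^ S n).
    assert (0 <= a ^ S n) by (apply pow_le; lra). nra.
Qed.

Lemma exp_pow_n : forall x n, exp x ^ n = exp (INR n * x).
Proof.
  intros x n; induction n.
  - simpl. rewrite Rmult_0_l, exp_0. reflexivity.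
  - rewrite S_INR. simpl. rewrite IHn. rewrite <- exp_plus. f_equal. ring.
Qed.

Lemma key_ineq : forall S K : nat, (3 <= S)%nat -> (1 <= K)%nat ->
  INR (S + K) ^ S < INR S ^ (S + K).
Proof.
  intros S K HS HK.
  assert (HS' : INR 3 <= INR S) by (apply le_INR; lia). simpl in HS'.
  assert (HK' : INR 1 <= INR K) by (apply le_INR; lia). simpl in HK'.
  set (x := INR K / INR S).
  assert (Hx : 0 < x) by (unfold x; apply Rdiv_lt_0_compat; lra).
  assert (H1 : INR (S + K) = INR S * (1 + x)) by (unfold x; rewrite plus_INR; field; lra).
  rewrite H1, Rpow_mult_distr, pow_add.
  apply Rmult_lt_compat_l; [apply pow_lt; lra|].
  destruct S as [|S']; [lia|].
  apply Rlt_le_trans with (exp x ^ S (S')).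
  - apply pow_lt_l. split; [lra|]. apply exp_ineq1. lra.
  - rewrite exp_pow_n. replace (INR (S (S')) * x) with (INR K) by (unfold x; field; lra).
    replace (INR K) with (INR K * 1) by ring. rewrite <- exp_pow_n.
    apply pow_incr. split; [left; apply exp_pos|]. pose proof exp_le_3. lra.
Qed.

Lemma nat_pow_big : forall T : nat, (5 <= T)%nat -> (T * T < 2 ^ T)%nat.
Proof.
  intros T HT. induction T as [|T IH]; [lia|].
  destruct (Nat.eq_dec T 4) as [->|HT4]; [simpl; lia|].
  specialize (IH ltac:(lia)). rewrite Nat.pow_succ_r'. nia.
Qed.

Lemma int_sol : forall S T : nat, (1 < S)%nat -> (S < T)%nat -> INR S ^ T = INR T ^ S ->
  S = 2%nat /\ T = 4%nat.
Proof.
  intros S T HS HT H.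
  destruct (le_lt_dec 3 S) as [H3|H3].
  - exfalso. replace T with (S + (T - S))%nat in H by lia.
    pose proof (key_ineq S (T - S) H3 ltac:(lia)). lra.
  - assert (S = 2%nat) by lia. subst S. split; auto.
    rewrite <- !pow_INR in H. apply INR_eq in H.
    destruct (Nat.eq_dec T 3) as [->|H3']; [simpl in H; lia|].
    destruct (Nat.eq_dec T 4) as [->|H4]; auto.
    exfalso. pose proof (nat_pow_big T ltac:(lia)). simpl in H. lia.
Qed.

Lemma rat_int : forall a b M c, (0 < b)%Z -> (0 < c)%nat ->
  (IZR a / IZR b) ^ c = IZR M -> exists n, IZR a / IZR b = IZR n.
Proof.
  intros a b M c Hb Hc H.
  set (g := Z.gcd a b).
  assert (Hg0 : (0 <= g)%Z) by apply Z.gcd_nonneg.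
  assert (Hg1 : g <> 0%Z) by (intro H0; apply Z.gcd_eq_0 in H0; lia).
  assert (Hrp : rel_prime (a / g) (b / g))
    by (apply Zis_gcd_rel_prime; [lia|lia|apply Zgcd_is_gcd]).
  assert (Ha : a = (g * (a / g))%Z) by (apply Zdivide_Zdiv_eq; [lia|apply Z.gcd_divide_l]).
  assert (Hb' : b = (g * (b / g))%Z) by (apply Zdivide_Zdiv_eq; [lia|apply Z.gcd_divide_r]).
  set (a' := (a / g)%Z) in *. set (b' := (b / g)%Z) in *.
  assert (Hb'0 : (0 < b')%Z) by nia.
  assert (Hq : IZR a / IZR b = IZR a' / IZR b').
  { rewrite Ha, Hb' at 1. rewrite !mult_IZR. field. split; apply not_0_IZR; lia. }
  rewrite Hq in *.
  assert (Hint : (a' ^ Z.of_nat c = M * b' ^ Z.of_nat c)%Z).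
  { apply eq_IZR. rewrite <- !pow_IZR, mult_IZR, <- pow_IZR, <- H.
    unfold Rdiv. rewrite Rpow_mult_distr, pow_inv. field.
    apply pow_nonzero. apply not_0_IZR; lia. }
  destruct c as [|c']; [lia|].
  assert (Hdiv : (b' | a' ^ Z.of_nat (S c'))%Z).
  { exists (M * b' ^ Z.of_nat c')%Z. rewrite Hint. rewrite Nat2Z.inj_succ, Z.pow_succ_r by lia. ring. }
  assert (Hrp2 : rel_prime b' (a' ^ Z.of_nat (S c'))).
  { apply Zpow_facts.rel_prime_Zpower_r; [lia|]. apply rel_prime_sym; auto. }
  destruct Hrp2 as [_ _ Hd]. specialize (Hd b' (Z.divide_refl _) Hdiv).
  apply Z.divide_1_r in Hd. assert (b' = 1%Z) by lia.
  exists a'. rewrite H0. field.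
Qed.

Lemma Rpower_pos : forall x y, 0 < Rpower x y.
Proof. intros; unfold Rpower; apply exp_pos. Qed.

Lemma rpow_rat : forall x p d, 0 < x ->
  (Rpower x (IZR (Z.pos p) / IZR (Z.pos d))) ^ (Pos.to_nat d) = x ^ (Pos.to_nat p).
Proof.
  intros x p d Hx.
  rewrite <- (Rpower_pow (Pos.to_nat d) (Rpower x (IZR (Z.pos p) / IZR (Z.pos d)))) by apply Rpower_pos.
  rewrite Rpower_mult. rewrite INR_posZ.
  replace (IZR (Z.pos p) / IZR (Z.pos d) * IZR (Z.pos d)) with (IZR (Z.pos p))
    by (field; apply not_0_IZR; lia).
  rewrite <- INR_posZ. apply Rpower_pow; auto.
Qed.

Lemma Q_pos_form : forall q, 0 < Q2R q -> exists p d, Q2R q = IZR (Z.pos p) / IZR (Z.pos d).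
Proof.
  intros [n d] H. unfold Q2R in *; simpl in *.
  destruct n as [|p|p].
  - rewrite Rmult_0_l in H. lra.
  - exists p, d. reflexivity.
  - exfalso. assert (Hd : 0 < / IZR (Z.pos d)) by (apply Rinv_0_lt_compat, IZR_lt; lia).
    assert (Hn : IZR (Z.neg p) < 0) by (apply IZR_lt; lia). nra.
Qed.

Lemma Crational_pow : forall q k, Crational (RtoC (Q2R q ^ k)).
Proof.
  intros q k; induction k.
  - exists 1%Q. unfold Q2R; simpl. f_equal. field.
  - destruct IHk as [q' Hq']. exists (q * q')%Q. simpl. rewrite Q2R_mult.
    apply RtoC_inj in Hq'. rewrite Hq'. reflexivity.
Qed.

Lemma part2 : Schanuel ->
  (forall r s t : R,
      1 < s -> s < t -> Rpower s t = r -> Rpower t s = r ->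
      ((exists N : nat, r = INR N /\ N <> 16%nat) \/
       (forall n : nat, (1 <= n)%nat ->
          Calgebraic (RtoC (r ^ n)) /\ ~ Crational (RtoC (r ^ n)))) ->
      Ctranscendental (RtoC s) /\ Ctranscendental (RtoC t)).
Proof.
  intros HS r s t Hs Hst Hr1 Hr2 Hcase.
  assert (Hra : Calgebraic (RtoC r)).
  { destruct Hcase as [[N [-> _]]|Hc].
    - apply Crational_alg. replace (INR N) with (IZR (Z.of_nat N) / IZR 1).
      + apply Crational_div; lia.
      + rewrite INR_IZR_INZ. field.
    - destruct (Hc 1%nat (le_n 1)) as [Hc1 _]. rewrite pow_1 in Hc1. auto. }
  assert (Hs1 : RtoC s <> Cone) by (intro H0; apply RtoC_inj in H0; lra).
  assert (Hs0 : RtoC s <> Czero) by (apply RtoC_neq0; lra).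
  assert (Ht1 : RtoC t <> Cone) by (intro H0; apply RtoC_inj in H0; lra).
  assert (Ht0 : RtoC t <> Czero) by (apply RtoC_neq0; lra).
  destruct (part1 HS (RtoC s) (RtoC t) (RtoC (ln s)) (RtoC (ln t)) Hs0 Hs1 Ht0 Ht1) as [[Hsr Htr]|Hres].
  - rewrite Cexp_real, exp_ln by lra. reflexivity.
  - rewrite Cexp_real, exp_ln by lra. reflexivity.
  - rewrite <- RtoC_mul, Cexp_real. fold (Rpower s t). rewrite Hr1. auto.
  - rewrite <- RtoC_mul, Cexp_real. fold (Rpower t s). rewrite Hr2. auto.
  - exfalso.
    destruct Hsr as [qs Hqs]. apply RtoC_inj in Hqs.
    destruct Htr as [qt Hqt]. apply RtoC_inj in Hqt.
    destruct (Q_pos_form qs ltac:(lra)) as [ps [ds Hsq]].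
    destruct (Q_pos_form qt ltac:(lra)) as [pt [dt Hsq']].
    assert (E1 : r ^ Pos.to_nat dt = s ^ Pos.to_nat pt)
      by (rewrite <- Hr1, Hqt, Hsq'; apply rpow_rat; lra).
    assert (E2 : r ^ Pos.to_nat ds = t ^ Pos.to_nat ps)
      by (rewrite <- Hr2, Hqs, Hsq; apply rpow_rat; lra).
    destruct Hcase as [[N [HN HN16]]|Hc].
    + assert (Hsi : exists n1, s = IZR n1).
      { rewrite Hqs, Hsq. apply (rat_int _ _ (Z.of_nat N ^ Z.of_nat (Pos.to_nat dt)) (Pos.to_nat pt)); [lia|lia|].
        rewrite <- Hsq, <- Hqs, <- E1, HN, INR_IZR_INZ. apply pow_IZR. }
      assert (Hti : exists n2, t = IZR n2).
      { rewrite Hqt, Hsq'. apply (rat_int _ _ (Z.of_nat N ^ Z.of_nat (Pos.to_nat ds)) (Pos.to_nat ps)); [lia|lia|].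
        rewrite <- Hsq', <- Hqt, <- E2, HN, INR_IZR_INZ. apply pow_IZR. }
      destruct Hsi as [n1 Hn1]. destruct Hti as [n2 Hn2].
      assert (Hn1p : (1 < n1)%Z) by (apply lt_IZR; lra).
      assert (Hn2p : (n1 < n2)%Z) by (apply lt_IZR; lra).
      assert (HS1 : s = INR (Z.to_nat n1)) by (rewrite INR_IZR_INZ, Z2Nat.id by lia; auto).
      assert (HT1 : t = INR (Z.to_nat n2)) by (rewrite INR_IZR_INZ, Z2Nat.id by lia; auto).
      assert (Heq : INR (Z.to_nat n1) ^ (Z.to_nat n2) = INR (Z.to_nat n2) ^ (Z.to_nat n1)).
      { rewrite <- !Rpower_pow by (rewrite <- ?HS1, <- ?HT1; lra).
        rewrite <- HS1, <- HT1. congruence. }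
      assert (Hl1 : (1 < Z.to_nat n1)%nat) by (apply Nat2Z.inj_lt; rewrite Z2Nat.id by lia; simpl; lia).
      assert (Hl2 : (Z.to_nat n1 < Z.to_nat n2)%nat) by (apply Z2Nat.inj_lt; lia).
      destruct (int_sol _ _ Hl1 Hl2 Heq) as [HS2 HT4].
      apply HN16. apply INR_eq. rewrite <- HN, <- Hr1, HS1, HT1, HS2, HT4.
      rewrite Rpower_pow by (simpl; lra). simpl. ring.
    + destruct (Hc (Pos.to_nat dt) ltac:(lia)) as [_ Hnr]. apply Hnr.
      rewrite E1, Hqs. apply Crational_pow.
  - exact Hres.
Qed.

Theorem mainTheorem1 :
  Schanuel ->
  (forall z w Lz Lw : CC,
      z <> Czero -> z <> Cone -> w <> Czero -> w <> Cone ->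
      Cexp Lz = z -> Cexp Lw = w ->
      Calgebraic (Cexp (Cmul w Lz)) -> Calgebraic (Cexp (Cmul z Lw)) ->
      (Crational z /\ Crational w) \/ (Ctranscendental z /\ Ctranscendental w))
  /\
  (forall r s t : R,
      1 < s -> s < t -> Rpower s t = r -> Rpower t s = r ->
      ((exists N : nat, r = INR N /\ N <> 16%nat) \/
       (forall n : nat, (1 <= n)%nat ->
          Calgebraic (RtoC (r ^ n)) /\ ~ Crational (RtoC (r ^ n)))) ->
      Ctranscendental (RtoC s) /\ Ctranscendental (RtoC t)).
Proof.
  intros HS. split.
  - exact (part1 HS).
  - exact (part2 HS).
Qed.
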